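(* Let $B_{\mathrm{unl}}(x,y)=\sum_{i,j\ge0}b_{i,j}x^iy^j$, where $b_{i,j}$ is the number of isomorphism classes of bicoloured graphs with $i$ vertices in the first colour class and $j$ in the second, and let $T_{\mathrm{unl}}(x,y)=\sum_{i,j\ge0}\tau_{i,j}x^iy^j$, where $\tau_{i,j}$ is the number of isomorphism classes of tangles with $i$ vertices in the first colour class and $j$ in the second. Then \[T_{\mathrm{unl}}(x,y)=1-x-y-B_{\mathrm{unl}}(x,y)^{-1}.\]
   Context: A bicoloured graph is a triple $G=(V_1,V_2,E)$ with $V_1,V_2$ disjoint finite sets (ordered colour classes) and $E\subseteq V_1\times V_2$; isomorphisms are graph isomorphisms mapping $V_1$ to $V_1$ and $V_2$ to $V_2$. For a vertex $u$ let $N(u)$ be its set of neighbours. $G$ is called a tangle if $|V_1|\ge2$, $|V_2|\ge2$, the graph on $V_2$ joining $a,b$ whenever neither of $N(a),N(b)$ contains the other is connected, and the graph on $V_1$ defined by the same rule is connected. (Equivalently, viewing $G$ as the poset on $V_1\cup V_2$ with $u<w$ iff $u\in V_1,w\in V_2$, $(u,w)\in E$, the whole poset is a single tangle, i.e. a component of $(2+2)$-connectedness with top $V_2$ and bottom $V_1$.) *)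

(* Defs.v *)
From HB Require Import structures.
From mathcomp Require Import all_boot all_order all_algebra.
From mathcomp Require Import all_fingroup.
Set Implicit Arguments. Unset Strict Implicit. Unset Printing Implicit Defensive.
Import GRing.Theory Num.Theory.

(* A bicoloured graph with i vertices in the first colour class V1 = 'I_i and
   j vertices in the second colour class V2 = 'I_j is an edge set E ⊆ V1 × V2. *)
Definition bigraph (i j : nat) := {set 'I_i * 'I_j}.

Definition bi_iso (i j : nat) (G H : bigraph i j) : bool :=
  [exists s : {perm 'I_i}, exists t : {perm 'I_j},
     [forall u : 'I_i, forall w : 'I_j, ((u, w) \in G) == ((s u, t w) \in H)]].

Definition nbr1 (i j : nat) (G : bigraph i j) (u : 'I_i) : {set 'I_j} :=
  [set w | (u, w) \in G].
Definition nbr2 (i j : nat) (G : bigraph i j) (w : 'I_j) : {set 'I_i} :=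
  [set u | (u, w) \in G].

Definition incomp_rel (T U : finType) (N : T -> {set U}) : rel T :=
  fun a b => ~~ (N a \subset N b) && ~~ (N b \subset N a).

Definition connected_rel (T : finType) (r : rel T) : bool :=
  [forall a : T, forall b : T, connect r a b].

Definition is_tangle (i j : nat) (G : bigraph i j) : bool :=
  [&& 2 <= i, 2 <= j,
      connected_rel (incomp_rel (nbr2 G)) & connected_rel (incomp_rel (nbr1 G))].

Definition iso_class (i j : nat) (G : bigraph i j) : {set bigraph i j} :=
  [set H | bi_iso G H].

Definition b_unl (i j : nat) : nat :=
  #|[set iso_class G | G : bigraph i j]|.

Definition tau_unl (i j : nat) : nat :=
  #|[set iso_class G | G : bigraph i j & is_tangle G]|.

Definition fps2 := nat -> nat -> int.

Definition fps_mul (f g : fps2) : fps2 := fun m n =>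
  (\sum_(k < m.+1) \sum_(l < n.+1) f k l * g (m - k)%N (n - l)%N)%R.

Definition fps_one : fps2 := fun m n => if (m == 0%N) && (n == 0%N) then 1%R else 0%R.
Definition fps_x : fps2 := fun m n => if (m == 1%N) && (n == 0%N) then 1%R else 0%R.
Definition fps_y : fps2 := fun m n => if (m == 0%N) && (n == 1%N) then 1%R else 0%R.
Definition fps_sub (f g : fps2) : fps2 := fun m n => (f m n - g m n)%R.

Definition fps_eq (f g : fps2) : Prop := forall m n, f m n = g m n.

Definition B_unl : fps2 := fun m n => Posz (b_unl m n).
Definition T_unl : fps2 := fun m n => Posz (tau_unl m n).

(* Main.v *)
From HB Require Import structures.
From mathcomp Require Import all_boot all_order all_algebra all_fingroup.
Require Import Defs.
From mathcomp Require Import zify ring.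
Set Implicit Arguments. Unset Strict Implicit. Unset Printing Implicit Defensive.

Section Part0.

Section Basics.
Variables (i j : nat).

Definition gE (G : bigraph i j) (a b : nat) : bool :=
  if (insub a : option 'I_i, insub b : option 'I_j) is (Some u, Some w)
  then (u, w) \in G else false.

Lemma gE_val G (u : 'I_i) (w : 'I_j) : gE G u w = ((u, w) \in G).
Proof. by rewrite /gE !valK. Qed.

Lemma gE_out G a b : ~~ ((a < i) && (b < j)) -> gE G a b = false.
Proof.
rewrite /gE negb_and => h.
case: insubP => [u hu eu|//]; case: insubP => [w hw ew|//].
by move: h; rewrite -eu -ew !ltn_ord.
Qed.

Lemma gE_ord G a b (ha : a < i) (hb : b < j) :
  gE G a b = ((Ordinal ha, Ordinal hb) \in G).
Proof. by rewrite -gE_val. Qed.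

Lemma bigraph_ext (G H : bigraph i j) :
  (forall a b, a < i -> b < j -> gE G a b = gE H a b) -> G = H.
Proof.
move=> h; apply/setP => -[u w]; rewrite -!gE_val; exact: h.
Qed.

Definition nbij (n : nat) (p q : nat -> nat) :=
  forall a, a < n -> [/\ p a < n, q a < n, q (p a) = a & p (q a) = a].

Definition niso (G H : bigraph i j) := exists p1 q1 p2 q2,
  [/\ nbij i p1 q1, nbij j p2 q2 &
      forall a b, a < i -> b < j -> gE G a b = gE H (p1 a) (p2 b)].

Lemma bi_isoE (G H : bigraph i j) :
  bi_iso G H <-> exists (s : {perm 'I_i}) (t : {perm 'I_j}),
     forall u w, ((u, w) \in G) = ((s u, t w) \in H).
Proof.
split.
  by move=> /existsP[s /existsP[t /forallP h]]; exists s, t => u w;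
     apply/eqP; move/forallP: (h u); apply.
move=> [s [t h]]; apply/existsP; exists s; apply/existsP; exists t.
by apply/forallP => u; apply/forallP => w; rewrite h.
Qed.

Definition pn n (s : {perm 'I_n}) (a : nat) : nat :=
  if (insub a : option 'I_n) is Some u then val (s u) else a.

Lemma pn_val n (s : {perm 'I_n}) (u : 'I_n) : pn s u = s u.
Proof. by rewrite /pn valK. Qed.

Lemma nbij_perm n (s : {perm 'I_n}) : nbij n (pn s) (pn s^-1).
Proof.
move=> a ha; have -> : a = Ordinal ha by [].
by rewrite !pn_val permK permKV; split.
Qed.

Lemma perm_nbij n p q (h : nbij n p q) :
  exists s : {perm 'I_n}, forall u : 'I_n, val (s u) = p u.
Proof.
have hv (u : 'I_n) : val (insubd u (p u)) = p u.
  by rewrite val_insubd; case: (h u (ltn_ord u)) => ->.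
have inj : injective (fun u : 'I_n => insubd u (p u)).
  move=> u v /(congr1 val); rewrite !hv => e; apply: ord_inj.
  case: (h u (ltn_ord u)) => _ _ hu _; case: (h v (ltn_ord v)) => _ _ hv' _.
  by rewrite -hu -hv' e.
by exists (perm inj) => u; rewrite permE hv.
Qed.

Lemma bi_isoP (G H : bigraph i j) : bi_iso G H <-> niso G H.
Proof.
rewrite bi_isoE; split.
  move=> [s [t h]]; exists (pn s), (pn s^-1), (pn t), (pn t^-1); split;
    try exact: nbij_perm.
  move=> a b ha hb; have := h (Ordinal ha) (Ordinal hb).
  by rewrite -!gE_val -!pn_val.
move=> [p1 [q1 [p2 [q2 [h1 h2 he]]]]].
case: (perm_nbij h1) => s hs; case: (perm_nbij h2) => t ht.
exists s, t => u w; by rewrite -!gE_val he ?ltn_ord // hs ht.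
Qed.

Lemma bi_iso_refl (G : bigraph i j) : bi_iso G G.
Proof. by apply/bi_isoE; exists 1%g, 1%g => u w; rewrite !perm1. Qed.

Lemma bi_iso_sym (G H : bigraph i j) : bi_iso G H -> bi_iso H G.
Proof.
move/bi_isoE=> [s [t h]]; apply/bi_isoE; exists s^-1%g, t^-1%g => u w.
by rewrite h !permKV.
Qed.

Lemma bi_iso_trans (G H K : bigraph i j) : bi_iso G H -> bi_iso H K -> bi_iso G K.
Proof.
move/bi_isoE=> [s [t h]] /bi_isoE [s' [t' h']]; apply/bi_isoE.
by exists (s * s')%g, (t * t')%g => u w; rewrite h h' !permM.
Qed.

Lemma iso_classE (G H : bigraph i j) : iso_class G = iso_class H <-> bi_iso G H.
Proof.
split.
  move=> e; have : H \in iso_class H by rewrite inE bi_iso_refl.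
  by rewrite -e inE.
move=> h; apply/setP => K; rewrite !inE; apply/idP/idP => hk.
  exact: bi_iso_trans (bi_iso_sym h) hk.
exact: bi_iso_trans h hk.
Qed.

End Basics.

End Part0.

Section Part1.

Definition prefix m n (G : bigraph m n) (P1 : {set 'I_m}) (P2 : {set 'I_n}) : bool :=
  [forall u, forall w, ((u \in P1) && (w \notin P2) ==> ((u, w) \in G)) &&
                       ((w \in P2) && (u \notin P1) ==> ((u, w) \notin G))].

Lemma prefixP m n (G : bigraph m n) (P1 : {set 'I_m}) (P2 : {set 'I_n}) :
  reflect ((forall u w, u \in P1 -> w \notin P2 -> (u, w) \in G) /\
           (forall u w, w \in P2 -> u \notin P1 -> (u, w) \notin G))
          (prefix G P1 P2).
Proof.
apply: (iffP forallP).
  move=> h; split=> u w h1 h2; move/forallP: (h u) => /(_ w) /andP[e1 e2].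
    by apply: (implyP e1); rewrite h1 h2.
  by apply: (implyP e2); rewrite h1 h2.
move=> [h1 h2] u; apply/forallP => w; apply/andP; split; apply/implyP => /andP[a b].
  exact: h1.
exact: h2.
Qed.

Definition lowset m k : {set 'I_m} := [set u : 'I_m | u < k].

Section Cat.
Variables (m n k l : nat).

Definition catE (A : bigraph k l) (R : bigraph (m - k) (n - l)) (a b : nat) : bool :=
  if a < k then (if b < l then gE A a b else true)
  else (if b < l then false else gE R (a - k) (b - l)).

Definition cat (A : bigraph k l) (R : bigraph (m - k) (n - l)) : bigraph m n :=
  [set p : 'I_m * 'I_n | catE A R p.1 p.2].

Lemma gE_cat A R a b : a < m -> b < n -> gE (cat A R) a b = catE A R a b.
Proof. by move=> ha hb; rewrite gE_ord inE. Qed.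

Definition low (G : bigraph m n) : bigraph k l := [set p : 'I_k * 'I_l | gE G p.1 p.2].
Definition high (G : bigraph m n) : bigraph (m - k) (n - l) :=
  [set p : 'I_(m - k) * 'I_(n - l) | gE G (p.1 + k) (p.2 + l)].

Lemma gE_low G a b : a < k -> b < l -> gE (low G) a b = gE G a b.
Proof. by move=> ha hb; rewrite gE_ord inE. Qed.

Lemma gE_high G a b : a < m - k -> b < n - l -> gE (high G) a b = gE G (a + k) (b + l).
Proof. by move=> ha hb; rewrite gE_ord inE. Qed.

Lemma prefix_low_cat G : k <= m -> l <= n ->
  prefix G (lowset m k) (lowset n l) -> G = cat (low G) (high G).
Proof.
move=> hk hl /prefixP[p1 p2]; apply: bigraph_ext => a b ha hb.
rewrite gE_cat // /catE.
case: ifP => ak; case: ifP => bl.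
- by rewrite gE_low.
- by rewrite gE_ord; apply: p1; rewrite inE /= ?ak ?bl.
- by rewrite gE_ord; apply/negbTE/p2; rewrite inE /= ?ak ?bl.
- rewrite gE_high; last 2 first.
  + by move: ak ha => /negbT; rewrite -leqNgt; lia.
  + by move: bl hb => /negbT; rewrite -leqNgt; lia.
  rewrite !subnK //; by [move: ak => /negbT; rewrite -leqNgt|move: bl => /negbT; rewrite -leqNgt].
Qed.

Lemma prefix_cat A R : prefix (cat A R) (lowset m k) (lowset n l).
Proof.
apply/prefixP; split=> u w; rewrite !inE /catE /=.
  by move=> -> /negbTE ->.
by move=> -> /negbTE ->.
Qed.

End Cat.

Definition sumf k (p1 p2 : nat -> nat) (a : nat) :=
  if a < k then p1 a else p2 (a - k) + k.

Lemma nbij_sum m k p1 q1 p2 q2 : k <= m -> nbij k p1 q1 -> nbij (m - k) p2 q2 ->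
  nbij m (sumf k p1 p2) (sumf k q1 q2).
Proof.
move=> hk h1 h2 a ha; rewrite /sumf; case: ifP => ak.
  case: (h1 a ak) => x1 x2 x3 x4; rewrite x1 x2 x3 x4; split=> //; lia.
have hak : a - k < m - k by lia.
case: (h2 _ hak) => x1 x2 x3 x4.
have e1 : (p2 (a - k) + k < k) = false by lia.
have e2 : (q2 (a - k) + k < k) = false by lia.
rewrite e1 e2 !addnK x3 x4; split; lia.
Qed.


Lemma cat_iso m n k l (A A' : bigraph k l) (R R' : bigraph (m - k) (n - l)) :
  k <= m -> l <= n -> bi_iso A A' -> bi_iso R R' -> bi_iso (cat A R) (cat A' R').
Proof.
move=> hk hl /bi_isoP[p1 [q1 [p2 [q2 [h1 h2 he]]]]].
move=> /bi_isoP[r1 [s1 [r2 [s2 [g1 g2 ge]]]]].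
apply/bi_isoP; exists (sumf k p1 r1), (sumf k q1 s1), (sumf l p2 r2), (sumf l q2 s2).
split; try exact: nbij_sum.
move=> a b ha hb.
have hx := nbij_sum hk h1 g1; have hy := nbij_sum hl h2 g2.
case: (hx a ha) => ha' _ _ _; case: (hy b hb) => hb' _ _ _.
rewrite !gE_cat // /catE /sumf.
case: ifP => ak; case: ifP => bl.
- by case: (h1 a ak) => -> _ _ _; case: (h2 b bl) => -> _ _ _; apply: he.
- by case: (h1 a ak) => -> _ _ _; rewrite ifF //; lia.
- by rewrite ifF; [case: (h2 b bl) => -> | lia].
- rewrite ifF; last lia. rewrite ifF; last lia.
  rewrite !addnK; apply: ge; lia.
Qed.

Lemma nbij_lowq m k p q : nbij m p q -> (forall a, a < m -> (p a < k) = (a < k)) ->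
  forall a, a < m -> (q a < k) = (a < k).
Proof.
move=> h hp a ha; case: (h a ha) => _ hq _ e.
by rewrite -{2}e hp.
Qed.

Lemma nbij_low m k p q : k <= m -> nbij m p q -> (forall a, a < m -> (p a < k) = (a < k)) ->
  nbij k p q.
Proof.
move=> hk h hp a ha; have am : a < m by lia.
case: (h a am) => x1 x2 x3 x4; split=> //.
  by rewrite hp.
by rewrite (nbij_lowq h hp).
Qed.

Lemma nbij_high m k p q : k <= m -> nbij m p q -> (forall a, a < m -> (p a < k) = (a < k)) ->
  nbij (m - k) (fun a => p (a + k) - k) (fun a => q (a + k) - k).
Proof.
move=> hk h hp a ha; have am : a + k < m by lia.
have hq := nbij_lowq h hp.
case: (h _ am) => x1 x2 x3 x4.
have e1 := hp _ am; have e2 := hq _ am.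
have y1 : k <= p (a + k) by rewrite leqNgt e1; lia.
have y2 : k <= q (a + k) by rewrite leqNgt e2; lia.
rewrite !subnK // x3 x4 !addnK; split=> //; lia.
Qed.

Lemma cat_restrict m n k l (A A' : bigraph k l) (R R' : bigraph (m - k) (n - l)) :
  k <= m -> l <= n ->
  (exists p1 q1 p2 q2, [/\ nbij m p1 q1, nbij n p2 q2,
     (forall a b, a < m -> b < n -> gE (cat A R) a b = gE (cat A' R') (p1 a) (p2 b)),
     (forall a, a < m -> (p1 a < k) = (a < k)) &
     (forall b, b < n -> (p2 b < l) = (b < l))]) ->
  bi_iso A A' /\ bi_iso R R'.
Proof.
move=> hk hl [p1 [q1 [p2 [q2 [h1 h2 he hp1 hp2]]]]]; split; apply/bi_isoP.
  exists p1, q1, p2, q2; split; [exact: nbij_low hk h1 hp1|exact: nbij_low hl h2 hp2|].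
  move=> a b ha hb; have am : a < m by lia. have bn : b < n by lia.
  have := he a b am bn.
  case: (h1 a am) => x1 _ _ _; case: (h2 b bn) => y1 _ _ _.
  rewrite !gE_cat // /catE ha hb hp1 // hp2 // ha hb //.
exists (fun a => p1 (a + k) - k), (fun a => q1 (a + k) - k),
       (fun a => p2 (a + l) - l), (fun a => q2 (a + l) - l).
split; [exact: nbij_high hk h1 hp1|exact: nbij_high hl h2 hp2|].
move=> a b ha hb; have am : a + k < m by lia. have bn : b + l < n by lia.
have := he _ _ am bn.
case: (h1 _ am) => x1 _ _ _; case: (h2 _ bn) => z1 _ _ _.
have e1 := hp1 _ am; have e2 := hp2 _ bn.
have y1 : (p1 (a + k) < k) = false by rewrite e1; lia.
have y2 : (p2 (b + l) < l) = false by rewrite e2; lia.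
have y3 : (a + k < k) = false by lia.
have y4 : (b + l < l) = false by lia.
by rewrite !gE_cat // /catE y1 y2 y3 y4 !addnK.
Qed.

End Part1.

Section Part2.
Local Open Scope group_scope.

Lemma mem_imP (T : finType) (s : {perm T}) (A : {set T}) x :
  (s x \in s @: A) = (x \in A).
Proof. by apply: mem_imset; apply: perm_inj. Qed.

Lemma imsetK_perm (T : finType) (s : {perm T}) (A : {set T}) :
  s @: (s^-1 @: A) = A.
Proof.
by apply/setP => x; rewrite -{1}[x](permKV s) !mem_imP.
Qed.

Lemma prefix_iso m n (G H : bigraph m n) (s : {perm 'I_m}) (t : {perm 'I_n}) P1 P2 :
  (forall u w, ((u, w) \in G) = ((s u, t w) \in H)) ->
  prefix G P1 P2 -> prefix H (s @: P1) (t @: P2).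
Proof.
move=> h /prefixP[p1 p2]; apply/prefixP; split=> u w;
  rewrite -[u](permKV s) -[w](permKV t) !mem_imP -h.
  exact: p1.
exact: p2.
Qed.

Definition minpre m n (G : bigraph m n) (P1 : {set 'I_m}) (P2 : {set 'I_n}) : Prop :=
  [/\ prefix G P1 P2, (P1 != set0) || (P2 != set0) &
      forall Q1 Q2, prefix G Q1 Q2 -> Q1 \subset P1 -> Q2 \subset P2 ->
        (Q1 = set0 /\ Q2 = set0) \/ (Q1 = P1 /\ Q2 = P2)].

Lemma iso_inv m n (G H : bigraph m n) (s : {perm 'I_m}) (t : {perm 'I_n}) :
  (forall u w, ((u, w) \in G) = ((s u, t w) \in H)) ->
  (forall u w, ((u, w) \in H) = ((s^-1 u, t^-1 w) \in G)).
Proof. by move=> h u w; rewrite h !permKV. Qed.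

Lemma minpre_iso m n (G H : bigraph m n) (s : {perm 'I_m}) (t : {perm 'I_n}) P1 P2 :
  (forall u w, ((u, w) \in G) = ((s u, t w) \in H)) ->
  minpre G P1 P2 -> minpre H (s @: P1) (t @: P2).
Proof.
move=> h [hp hne hmin]; split.
- exact: prefix_iso h hp.
- by rewrite !imset_eq0.
move=> Q1 Q2 hq s1 s2.
have hq' := prefix_iso (iso_inv h) hq.
have t1 : s^-1 @: Q1 \subset P1.
  by rewrite -[P1](imsetK_perm s^-1) invgK imsetS.
have t2 : t^-1 @: Q2 \subset P2.
  by rewrite -[P2](imsetK_perm t^-1) invgK imsetS.
case: (hmin _ _ hq' t1 t2) => -[e1 e2]; [left|right].
  by rewrite -(imsetK_perm s Q1) -(imsetK_perm t Q2) e1 e2 !imset0.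
by rewrite -(imsetK_perm s Q1) -(imsetK_perm t Q2) e1 e2.
Qed.

Lemma prefixI m n (G : bigraph m n) P1 P2 Q1 Q2 :
  prefix G P1 P2 -> prefix G Q1 Q2 -> prefix G (P1 :&: Q1) (P2 :&: Q2).
Proof.
move=> /prefixP[p1 p2] /prefixP[q1 q2]; apply/prefixP; split=> u w.
  rewrite !inE => /andP[a b]; rewrite negb_and => /orP[]; [exact: p1|exact: q1].
rewrite !inE => /andP[a b]; rewrite negb_and => /orP[]; [exact: p2|exact: q2].
Qed.

Lemma minpre_single1 m n (G : bigraph m n) P1 P2 a :
  minpre G P1 P2 -> a \in P1 -> P2 = set0 -> P1 = [set a].
Proof.
move=> [hp _ hmin] ha e2.
have hq : prefix G [set a] set0.
  move/prefixP: hp => [p1 _]; apply/prefixP; split=> u w.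
    by rewrite inE => /eqP -> _; apply: p1; rewrite // e2 inE.
  by rewrite in_set0.
have s1 : [set a] \subset P1 by rewrite sub1set.
have s2 : (set0 : {set 'I_n}) \subset P2 by rewrite sub0set.
case: (hmin _ _ hq s1 s2) => -[e _] //.
by move/setP: e => /(_ a); rewrite !inE eqxx.
Qed.

Lemma minpre_single2 m n (G : bigraph m n) P1 P2 b :
  minpre G P1 P2 -> b \in P2 -> P1 = set0 -> P2 = [set b].
Proof.
move=> [hp _ hmin] hb e1.
have hq : prefix G set0 [set b].
  move/prefixP: hp => [_ p2]; apply/prefixP; split=> u w.
    by rewrite in_set0.
  by rewrite inE => /eqP -> _; apply: p2; rewrite // e1 inE.
have s1 : (set0 : {set 'I_m}) \subset P1 by rewrite sub0set.
have s2 : [set b] \subset P2 by rewrite sub1set.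
case: (hmin _ _ hq s1 s2) => -[_ e] //.
by move/setP: e => /(_ b); rewrite !inE eqxx.
Qed.

Lemma minpre_two m n (G : bigraph m n) P1 P2 P1' P2' :
  minpre G P1 P2 -> minpre G P1' P2' ->
  (P1 = P1' /\ P2 = P2') \/
  (exists a a', [/\ P1 = [set a], P2 = set0, P1' = [set a'] & P2' = set0]) \/
  (exists b b', [/\ P1 = set0, P2 = [set b], P1' = set0 & P2' = [set b']]).
Proof.
move=> h h'; have [hp hne hmin] := h; have [hp' hne' hmin'] := h'.
have hI := prefixI hp hp'.
case: (hmin _ _ hI (subsetIl _ _) (subsetIl _ _)) => -[e1 e2].
  2: { case: (hmin' _ _ hI (subsetIr _ _) (subsetIr _ _)) => -[f1 f2].
       - by move: hne; rewrite -e1 -e2 f1 f2 !eqxx.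
       - by left; rewrite -e1 -e2 f1 f2. }
have d1 : forall x, x \in P1 -> x \in P1' -> False.
  by move=> x a b; move/setP: e1 => /(_ x); rewrite !inE a b.
have d2 : forall x, x \in P2 -> x \in P2' -> False.
  by move=> x a b; move/setP: e2 => /(_ x); rewrite !inE a b.
move/prefixP: hp => [p1 p2]; move/prefixP: hp' => [p1' p2'].
have c1 : forall a b, a \in P1 -> b \in P2' -> False.
  move=> a b ha hb.
  have : (a, b) \in G by apply: p1 => //; apply/negP => hb'; exact: d2 hb' hb.
  by apply/negP; apply: p2' => //; apply/negP => ha'; exact: d1 ha ha'.
have c2 : forall a b, a \in P1' -> b \in P2 -> False.
  move=> a b ha hb.
  have : (a, b) \in G by apply: p1' => //; apply/negP => hb'; exact: d2 hb hb'.
  by apply/negP; apply: p2 => //; apply/negP => ha'; exact: d1 ha' ha.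
case: (set_0Vmem P1) => [E1|[a ha]].
- move: hne; rewrite E1 eqxx /= => /set0Pn[b hb].
  case: (set_0Vmem P1') => [E1'|[a' ha']]; last by case: (c2 _ _ ha' hb).
  move: hne'; rewrite E1' eqxx /= => /set0Pn[b' hb'].
  right; right; exists b, b'; split=> //.
    exact: minpre_single2 h hb E1.
  exact: minpre_single2 h' hb' E1'.
- case: (set_0Vmem P2') => [E2'|[b' hb']]; last by case: (c1 _ _ ha hb').
  move: hne'; rewrite E2' eqxx orbF => /set0Pn[a' ha'].
  case: (set_0Vmem P2) => [E2|[b hb]]; last by case: (c2 _ _ ha' hb).
  right; left; exists a, a'; split=> //.
    exact: minpre_single1 h ha E2.
  exact: minpre_single1 h' ha' E2'.
Qed.

End Part2.

Section Part3.
Local Open Scope group_scope.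

Lemma perm_set (T : finType) (A B : {set T}) :
  #|A| = #|B| -> exists s : {perm T}, s @: A = B.
Proof.
move: {2}#|A :\: B| (leqnn #|A :\: B|) => c; elim: c A => [|c IH] A hc hAB.
  have sAB : A \subset B by rewrite -setD_eq0 -cards_eq0; lia.
  exists 1; rewrite imset_perm1; apply/eqP; rewrite eqEcard sAB; lia.
have [sAB|nsAB] := boolP (A \subset B).
  exists 1; rewrite imset_perm1; apply/eqP; rewrite eqEcard sAB; lia.
case/subsetPn: nsAB => a ha hna.
have [sBA|nsBA] := boolP (B \subset A).
  have eBA : B = A by apply/eqP; rewrite eqEcard sBA hAB leqnn.
  by move: hna; rewrite eBA ha.
case/subsetPn: nsBA => b hb hnb.
set A' := tperm a b @: A.
have cA' : #|A'| = #|B| by rewrite card_imset //; apply: perm_inj.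
have sub : A' :\: B \subset (A :\: B) :\ a.
  apply/subsetP => x; rewrite in_setD => /andP[xB /imsetP[y yA ex]].
  rewrite !inE xB /=; subst x.
  case: tpermP xB => [ya|yb|ya yb] xB.
  - by move: xB; rewrite hb.
  - by move: yA; rewrite yb (negbTE hnb).
  - by rewrite yA andbT; apply/eqP.
have le := subset_leq_card sub.
move: hc; rewrite (cardsD1 a) !inE ha hna /= => hc.
case: (IH A' _ cA') => [|s' hs']; first lia.
exists (tperm a b * s'); rewrite -hs' /A' -imset_comp.
by apply: eq_imset => x; rewrite permM.
Qed.

Definition inS n (Q : {set 'I_n}) (a : nat) : bool :=
  if (insub a : option 'I_n) is Some x then x \in Q else false.

Lemma inS_val n (Q : {set 'I_n}) (x : 'I_n) : inS Q x = (x \in Q).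
Proof. by rewrite /inS valK. Qed.

Lemma inS_lt n (Q : {set 'I_n}) a : inS Q a -> a < n.
Proof. by rewrite /inS; case: insubP. Qed.

Definition atom k l (A : bigraph k l) : bool :=
  (0 < k + l) && [forall Q1 : {set 'I_k}, forall Q2 : {set 'I_l},
     prefix A Q1 Q2 ==> (((Q1 == set0) && (Q2 == set0)) || ((Q1 == setT) && (Q2 == setT)))].

Lemma atomP k l (A : bigraph k l) : atom A -> forall Q1 Q2, prefix A Q1 Q2 ->
  (Q1 = set0 /\ Q2 = set0) \/ (Q1 = setT /\ Q2 = setT).
Proof.
move=> /andP[_ /forallP h] Q1 Q2 hq; move/forallP: (h Q1) => /(_ Q2) /implyP /(_ hq).
by case/orP => /andP[/eqP -> /eqP ->]; [left|right].
Qed.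

Lemma atomI k l (A : bigraph k l) : 0 < k + l ->
  (forall Q1 Q2, prefix A Q1 Q2 -> (Q1 = set0 /\ Q2 = set0) \/ (Q1 = setT /\ Q2 = setT)) ->
  atom A.
Proof.
move=> h0 h; rewrite /atom h0 /=; apply/forallP => Q1; apply/forallP => Q2.
apply/implyP => hq; case: (h _ _ hq) => -[-> ->]; rewrite !eqxx ?orbT //.
Qed.

Lemma card_lowset m k : k <= m -> #|lowset m k| = k.
Proof.
move=> hk; have -> : lowset m k = [set widen_ord hk x | x : 'I_k].
  apply/setP => u; rewrite inE; apply/idP/imsetP => [uk|[x _ ->]] /=.
    by exists (Ordinal uk) => //; apply: val_inj.
  exact: ltn_ord.
rewrite card_imset ?card_ord // => x y /(congr1 val) /= e; exact: val_inj.
Qed.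

Lemma lowset_eq0 m k : k <= m -> (lowset m k == set0) = (k == 0).
Proof. by move=> hk; rewrite -cards_eq0 card_lowset. Qed.

Lemma minpre_ex m n (G : bigraph m n) : 0 < m + n -> exists P1 P2, minpre G P1 P2.
Proof.
move=> h0.
pose P c := [exists P1 : {set 'I_m}, exists P2 : {set 'I_n},
   [&& prefix G P1 P2, (P1 != set0) || (P2 != set0) & #|P1| + #|P2| == c]].
have ex : exists c, P c.
  exists (m + n); apply/existsP; exists setT; apply/existsP; exists setT.
  rewrite !cardsT !card_ord eqxx andbT -!card_gt0 !cardsT !card_ord.
  have -> : (0 < m) || (0 < n) by lia.
  rewrite andbT; apply/prefixP; split=> u w; by rewrite !inE.
case: (ex_minnP ex) => c /existsP[P1 /existsP[P2 /and3P[hp hne /eqP hc]]] hmin.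
exists P1, P2; split=> // Q1 Q2 hq s1 s2.
have [e|ne] := boolP ((Q1 != set0) || (Q2 != set0)).
  right; have : c <= #|Q1| + #|Q2|.
    apply: hmin; apply/existsP; exists Q1; apply/existsP; exists Q2.
    by rewrite hq e eqxx.
  have := subset_leq_card s1; have := subset_leq_card s2 => c2 c1 le.
  have hc' : #|P1| + #|P2| = c := hc.
  split; apply/eqP; rewrite eqEcard ?s1 ?s2 /=.
    by rewrite -(leq_add2r #|P2|) hc'; apply: leq_trans le _; rewrite leq_add2l.
  by rewrite -(leq_add2l #|P1|) hc'; apply: leq_trans le _; rewrite leq_add2r.
by left; move: ne; rewrite negb_or !negbK => /andP[/eqP -> /eqP ->].
Qed.

End Part3.

Section Part4.
Local Open Scope group_scope.

Definition imgG m n (s : {perm 'I_m}) (t : {perm 'I_n}) (G : bigraph m n) : bigraph m n :=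
  [set p | ((s^-1) p.1, (t^-1) p.2) \in G].

Lemma imgG_iso m n (s : {perm 'I_m}) (t : {perm 'I_n}) (G : bigraph m n) u w :
  ((u, w) \in G) = ((s u, t w) \in imgG s t G).
Proof. by rewrite inE /= !permK. Qed.

Lemma inS_lift m k (Q : {set 'I_k}) (u : 'I_m) (x : 'I_k) :
  val u = val x -> inS Q u = (x \in Q).
Proof. by move=> e; rewrite e inS_val. Qed.

Lemma decomp m n (G : bigraph m n) : 0 < m + n ->
  exists k l, [/\ k <= m, l <= n & exists (A : bigraph k l) (R : bigraph (m - k) (n - l)),
    atom A /\ bi_iso G (cat A R)].
Proof.
move=> h0; case: (minpre_ex G h0) => P1 [P2 hP].
set k := #|P1|; set l := #|P2|.
have hk : k <= m by rewrite /k; apply: leq_trans (max_card _) _; rewrite card_ord.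
have hl : l <= n by rewrite /l; apply: leq_trans (max_card _) _; rewrite card_ord.
case: (@perm_set _ P1 (lowset m k)) => [|s hs]; first by rewrite card_lowset.
case: (@perm_set _ P2 (lowset n l)) => [|t ht]; first by rewrite card_lowset.
set H := imgG s t G.
have hiso := imgG_iso s t G.
have hH : minpre H (lowset m k) (lowset n l) by rewrite -hs -ht; exact: minpre_iso hiso hP.
have [hHp hHne hHmin] := hH.
have eH : H = cat (low k l H) (high k l H) := prefix_low_cat hk hl hHp.
exists k, l; split=> //; exists (low k l H), (high k l H); split; last first.
  by rewrite -eH; apply/bi_isoE; exists s, t.
apply: atomI.
  by move: hHne; rewrite !lowset_eq0 //; lia.
move=> Q1 Q2 /prefixP[q1 q2].
set L1 := [set u : 'I_m | inS Q1 u]; set L2 := [set w : 'I_n | inS Q2 w].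
move/prefixP: hHp => [h1 h2].
have hL : prefix H L1 L2.
  apply/prefixP; split=> u w.
    move=> hu hw; rewrite inE in hu; rewrite inE in hw.
    have uk := inS_lt hu.
    have [wl|wl] := ltnP w l; last by apply: h1; rewrite !inE -?leqNgt.
    have := q1 (Ordinal uk) (Ordinal wl).
    rewrite (inS_lift _ (x := Ordinal uk)) // in hu.
    rewrite (inS_lift _ (x := Ordinal wl)) // in hw.
    move=> /(_ hu hw); rewrite -gE_val gE_low //= => e.
    by rewrite -gE_val.
  move=> hw hu; rewrite inE in hu; rewrite inE in hw.
  have wl := inS_lt hw.
  have [uk|uk] := ltnP u k; last by apply: h2; rewrite !inE -?leqNgt.
  have := q2 (Ordinal uk) (Ordinal wl).
  rewrite (inS_lift _ (x := Ordinal uk)) // in hu.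
  rewrite (inS_lift _ (x := Ordinal wl)) // in hw.
  move=> /(_ hw hu); rewrite -gE_val gE_low //= => e.
  by rewrite -gE_val.
have s1 : L1 \subset lowset m k.
  by apply/subsetP => u; rewrite !inE => /inS_lt.
have s2 : L2 \subset lowset n l.
  by apply/subsetP => u; rewrite !inE => /inS_lt.
have key1 (x : 'I_k) : (Ordinal (leq_trans (ltn_ord x) hk) \in L1) = (x \in Q1).
  by rewrite inE (inS_lift _ (x := x)).
have key2 (x : 'I_l) : (Ordinal (leq_trans (ltn_ord x) hl) \in L2) = (x \in Q2).
  by rewrite inE (inS_lift _ (x := x)).
case: (hHmin _ _ hL s1 s2) => -[e1 e2]; [left|right]; split; apply/setP => x.
- by rewrite -key1 e1 !inE.
- by rewrite -key2 e2 !inE.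
- by rewrite -key1 e1 !inE; exact: (ltn_ord x).
- by rewrite -key2 e2 !inE; exact: (ltn_ord x).
Qed.

End Part4.

Section Part5.
Local Open Scope group_scope.

Lemma atom_minpre m n k l (A : bigraph k l) (R : bigraph (m - k) (n - l)) :
  k <= m -> l <= n -> atom A -> minpre (cat A R) (lowset m k) (lowset n l).
Proof.
move=> hk hl hA; split; first exact: prefix_cat.
  by move: hA => /andP[h0 _]; rewrite !lowset_eq0 //; lia.
move=> Q1 Q2 /prefixP[q1 q2] s1 s2.
set S1 := [set x : 'I_k | inS Q1 x]; set S2 := [set y : 'I_l | inS Q2 y].
have lift1 (x : 'I_k) : (x \in S1) = (Ordinal (leq_trans (ltn_ord x) hk) \in Q1).
  by rewrite inE (@inS_lift _ _ Q1 x (Ordinal (leq_trans (ltn_ord x) hk))).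
have lift2 (y : 'I_l) : (y \in S2) = (Ordinal (leq_trans (ltn_ord y) hl) \in Q2).
  by rewrite inE (@inS_lift _ _ Q2 y (Ordinal (leq_trans (ltn_ord y) hl))).
have edge (x : 'I_k) (y : 'I_l) :
    ((x, y) \in A) = ((Ordinal (leq_trans (ltn_ord x) hk),
                       Ordinal (leq_trans (ltn_ord y) hl)) \in cat A R).
  by rewrite -!gE_val gE_cat ?(leq_trans (ltn_ord _)) // /catE /= !ltn_ord.
have hS : prefix A S1 S2.
  apply/prefixP; split=> x y.
    by rewrite lift1 lift2 edge => a b; apply: q1 a b.
  by rewrite lift1 lift2 edge => a b; apply: q2 a b.
have back1 (u : 'I_m) (uk : u < k) : (u \in Q1) = (Ordinal uk \in S1).
  have e : Ordinal (leq_trans (ltn_ord (Ordinal uk)) hk) = u by apply: val_inj.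
  by rewrite lift1 e.
have back2 (w : 'I_n) (wl : w < l) : (w \in Q2) = (Ordinal wl \in S2).
  have e : Ordinal (leq_trans (ltn_ord (Ordinal wl)) hl) = w by apply: val_inj.
  by rewrite lift2 e.
have lt1 u : u \in Q1 -> u < k by move/(subsetP s1); rewrite inE.
have lt2 w : w \in Q2 -> w < l by move/(subsetP s2); rewrite inE.
case: (atomP hA hS) => -[e1 e2]; [left|right]; split; apply/setP => u.
- rewrite inE; apply/negbTE/negP => hu.
  by move: (hu); rewrite (back1 _ (lt1 _ hu)) e1 inE.
- rewrite inE; apply/negbTE/negP => hu.
  by move: (hu); rewrite (back2 _ (lt2 _ hu)) e2 inE.
- rewrite inE; apply/idP/idP => [|uk]; first exact: lt1.
  by rewrite (back1 _ uk) e1 inE.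
- rewrite inE; apply/idP/idP => [|uk]; first exact: lt2.
  by rewrite (back2 _ uk) e2 inE.
Qed.

Lemma cat_restrict_perm m n k l (A A' : bigraph k l) (R R' : bigraph (m - k) (n - l))
  (s : {perm 'I_m}) (t : {perm 'I_n}) :
  k <= m -> l <= n ->
  (forall u w, ((u, w) \in cat A R) = ((s u, t w) \in cat A' R')) ->
  s @: lowset m k = lowset m k -> t @: lowset n l = lowset n l ->
  bi_iso A A' /\ bi_iso R R'.
Proof.
move=> hk hl h hs ht; apply: cat_restrict => //.
exists (pn s), (pn s^-1), (pn t), (pn t^-1); split; try exact: nbij_perm.
- move=> a b ha hb; have := h (Ordinal ha) (Ordinal hb).
  by rewrite -!gE_val -!pn_val.
- move=> a ha; have := pn_val s (Ordinal ha) => /= ->.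
  have := mem_imP s (lowset m k) (Ordinal ha); rewrite hs !inE //=.
- move=> b hb; have := pn_val t (Ordinal hb) => /= ->.
  have := mem_imP t (lowset n l) (Ordinal hb); rewrite ht !inE //=.
Qed.

Lemma tperm_aut1 m n (G : bigraph m n) a a' :
  prefix G [set a] set0 -> prefix G [set a'] set0 ->
  forall u w, ((u, w) \in G) = ((tperm a a' u, w) \in G).
Proof.
move=> /prefixP[h _] /prefixP[h' _] u w.
have ua : (a, w) \in G by apply: h; rewrite ?inE.
have ua' : (a', w) \in G by apply: h'; rewrite ?inE.
by case: tpermP => [->|->|//]; rewrite ua ua'.
Qed.

Lemma tperm_aut2 m n (G : bigraph m n) b b' :
  prefix G set0 [set b] -> prefix G set0 [set b'] ->
  forall u w, ((u, w) \in G) = ((u, tperm b b' w) \in G).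
Proof.
move=> /prefixP[_ h] /prefixP[_ h'] u w.
have ub : (u, b) \notin G by apply: h; rewrite ?inE.
have ub' : (u, b') \notin G by apply: h'; rewrite ?inE.
by case: tpermP => [->|->|//]; rewrite (negbTE ub) (negbTE ub').
Qed.

Lemma card_im_lowset m k (s : {perm 'I_m}) : k <= m -> #|s @: lowset m k| = k.
Proof. by move=> hk; rewrite card_imset ?card_lowset //; apply: perm_inj. Qed.

Lemma cat_dims m n k l k' l' (A : bigraph k l) (R : bigraph (m - k) (n - l))
  (A' : bigraph k' l') (R' : bigraph (m - k') (n - l')) :
  k <= m -> l <= n -> k' <= m -> l' <= n -> atom A -> atom A' ->
  bi_iso (cat A R) (cat A' R') -> k = k' /\ l = l'.
Proof.
move=> hk hl hk' hl' hA hA' /bi_isoE[s [t h]].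
have h1 := minpre_iso h (atom_minpre R hk hl hA).
have h2 := atom_minpre R' hk' hl' hA'.
case: (minpre_two h1 h2) => [[e1 e2]|[[a [a' [e1 e2 e3 e4]]]|[b [b' [e1 e2 e3 e4]]]]].
- have := card_im_lowset s hk; have := card_im_lowset t hl.
  by rewrite e1 e2 !card_lowset // => -> ->.
- have := card_im_lowset s hk; have := card_im_lowset t hl.
  rewrite e1 e2 cards1 cards0 => <- <-.
  have := card_lowset hk'; have := card_lowset hl'.
  by rewrite e3 e4 cards1 cards0 => <- <-.
- have := card_im_lowset s hk; have := card_im_lowset t hl.
  rewrite e1 e2 cards1 cards0 => <- <-.
  have := card_lowset hk'; have := card_lowset hl'.
  by rewrite e3 e4 cards1 cards0 => <- <-.
Qed.

Lemma cat_parts m n k l (A A' : bigraph k l) (R R' : bigraph (m - k) (n - l)) :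
  k <= m -> l <= n -> atom A -> atom A' ->
  bi_iso (cat A R) (cat A' R') -> bi_iso A A' /\ bi_iso R R'.
Proof.
move=> hk hl hA hA' /bi_isoE[s [t h]].
have h1 := minpre_iso h (atom_minpre R hk hl hA).
have h2 := atom_minpre R' hk hl hA'.
case: (minpre_two h1 h2) => [[e1 e2]|[[a [a' [e1 e2 e3 e4]]]|[b [b' [e1 e2 e3 e4]]]]].
- exact: cat_restrict_perm h e1 e2.
- have [z1 _ _] := h1; have [z2 _ _] := h2.
  rewrite e1 e2 in z1; rewrite e3 e4 in z2.
  have aut := tperm_aut1 z1 z2.
  apply: (@cat_restrict_perm _ _ _ _ _ _ _ _ (s * tperm a a') t) => //.
    by move=> u w; rewrite h aut permM.
  have -> : (s * tperm a a') @: lowset m k = tperm a a' @: (s @: lowset m k).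
    by rewrite -imset_comp; apply: eq_imset => x; rewrite permM.
    by rewrite e1 imset_set1 tpermL e3.
  by rewrite e2 e4.
- have [z1 _ _] := h1; have [z2 _ _] := h2.
  rewrite e1 e2 in z1; rewrite e3 e4 in z2.
  have aut := tperm_aut2 z1 z2.
  apply: (@cat_restrict_perm _ _ _ _ _ _ _ _ s (t * tperm b b')) => //.
      by move=> u w; rewrite h aut permM.
    by rewrite e1 e3.
  have -> : (t * tperm b b') @: lowset n l = tperm b b' @: (t @: lowset n l).
    by rewrite -imset_comp; apply: eq_imset => x; rewrite permM.
  by rewrite e2 imset_set1 tpermL e4.
Qed.

End Part5.

Section Part6.

Lemma connect_closed (T : finType) (r : rel T) (S : pred T) a b :
  (forall x y, r x y -> S x -> S y) -> connect r a b -> S a -> S b.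
Proof.
move=> h /connectP[p hp ->]; elim: p a hp => [|c p IH] a //= /andP[hac hp] ha.
exact: IH hp (h _ _ hac ha).
Qed.

Lemma connect_step (T : finType) (r : rel T) a b :
  connect r a b -> a != b -> exists c, r a c.
Proof.
move=> /connectP[[|c p] hp ->] //=; first by rewrite eqxx.
by move/andP: hp => [h _] _; exists c.
Qed.

Lemma incomp_sym (T U : finType) (N : T -> {set U}) : symmetric (incomp_rel N).
Proof. by move=> a b; rewrite /incomp_rel andbC. Qed.

Lemma min_ex (T : finType) (x : T) (F : T -> nat) : exists c0, forall u, F c0 <= F u.
Proof. by case: (@arg_minnP T x xpredT F isT) => c0 _ h; exists c0 => u; apply: h. Qed.

Lemma above (T U : finType) (N : T -> {set U}) (c0 : T) :
  (forall u, #|N c0| <= #|N u|) ->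
  forall x c, ~~ connect (incomp_rel N) c0 x -> connect (incomp_rel N) c0 c ->
  N c \subset N x.
Proof.
move=> hmin x c hx hc.
pose S := fun c => connect (incomp_rel N) c0 c && (N c \subset N x).
suff : S c by case/andP.
apply: (connect_closed (S := S)) hc _; last first.
  rewrite /S connect0 /=.
  have : ~~ incomp_rel N c0 x by apply: contra hx => h; exact: connect1.
  rewrite /incomp_rel negb_and !negbK => /orP[] // sx.
  have e : N x == N c0 by rewrite eqEcard sx hmin.
  by rewrite (eqP e).
move=> y z hyz /andP[hy sy]; rewrite /S.
have hz : connect (incomp_rel N) c0 z by apply: connect_trans hy (connect1 hyz).
rewrite hz /=.
have : ~~ incomp_rel N z x.
  by apply: contra hx => h; exact: connect_trans hz (connect1 h).
rewrite /incomp_rel negb_and !negbK => /orP[] // sx.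
move: hyz; rewrite /incomp_rel => /andP[nyz _].
by case/negP: nyz; apply: subset_trans sy sx.
Qed.

Section Tangle.
Variables (k l : nat) (A : bigraph k l).

Lemma nbr1E u w : (w \in nbr1 A u) = ((u, w) \in A).
Proof. by rewrite inE. Qed.
Lemma nbr2E u w : (u \in nbr2 A w) = ((u, w) \in A).
Proof. by rewrite inE. Qed.

Lemma atom_nouniv : atom A -> 2 <= k + l -> forall u, exists w, (u, w) \notin A.
Proof.
move=> hA h2 u; apply/existsP; apply/negP => /existsP hn.
have hp : prefix A [set u] set0.
  apply/prefixP; split=> x w; last by rewrite in_set0.
  rewrite inE => /eqP -> _; apply/negPn/negP => h; apply: hn; by exists w.
case: (atomP hA hp) => -[e1 e2].
  by move/setP: e1 => /(_ u); rewrite !inE eqxx.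
have c1 : #|[set u]| = #|[set: 'I_k]| by rewrite e1.
have c2 : #|(set0 : {set 'I_l})| = #|[set: 'I_l]| by rewrite e2.
rewrite cards1 cards0 !cardsT !card_ord in c1 c2; lia.
Qed.

Lemma atom_noiso : atom A -> 2 <= k + l -> forall w, exists u, (u, w) \in A.
Proof.
move=> hA h2 w; apply/existsP; apply/negP => /existsP hn.
have hp : prefix A set0 [set w].
  apply/prefixP; split=> u x; first by rewrite in_set0.
  rewrite inE => /eqP -> _; apply/negP => h; apply: hn; by exists u.
case: (atomP hA hp) => -[e1 e2].
  by move/setP: e2 => /(_ w); rewrite !inE eqxx.
have c1 : #|(set0 : {set 'I_k})| = #|[set: 'I_k]| by rewrite e1.
have c2 : #|[set w]| = #|[set: 'I_l]| by rewrite e2.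
rewrite cards1 cards0 !cardsT !card_ord in c1 c2; lia.
Qed.


Lemma other n (w : 'I_n) : 2 <= n -> exists w' : 'I_n, w' != w.
Proof.
move=> hn; have h0 : 0 < n by lia. have h1 : 1 < n by lia.
case: (eqVneq (val w) 0) => e.
  by exists (Ordinal h1); apply/eqP => /(congr1 val); rewrite e.
by exists (Ordinal h0); apply/eqP => e'; move: e; rewrite -e'.
Qed.

Lemma tangle_atom : is_tangle A -> atom A.
Proof.
move=> /and4P[hk hl c2 c1]; apply: atomI; first lia.
move=> Q1 Q2 /prefixP[q1 q2].
have F1 w : (exists u, (u, w) \in A) /\ (exists u, (u, w) \notin A).
  case: (other w hl) => w' hw'.
  move/forallP: c2 => /(_ w) /forallP /(_ w') hc.
  case: (connect_step hc); first by rewrite eq_sym.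
  move=> c /andP[/subsetPn[u hu hnu] /subsetPn[u' hu' hnu']].
  by split; [exists u; rewrite -nbr2E | exists u'; rewrite -nbr2E].
case: (set_0Vmem Q1) => [E1|[u0 hu0]].
  left; split=> //; apply/setP => w; rewrite in_set0; apply/negbTE/negP => hw.
  case: (F1 w) => -[u hu] _.
  by move: (q2 u w hw); rewrite E1 in_set0 hu => /(_ isT).
have allQ1 u : u \in Q1.
  move/forallP: c1 => /(_ u0) /forallP /(_ u) hc.
  apply: (connect_closed (S := fun u => u \in Q1)) hc hu0 => x y /andP[_ /subsetPn[w hw hnw]] hx.
  rewrite nbr1E in hw; rewrite nbr1E in hnw.
  have wQ : w \in Q2 by apply/negPn/negP => hw'; move: (q1 x w hx hw'); rewrite (negbTE hnw).
  by apply/negPn/negP => hy; move: (q2 y w wQ hy); rewrite hw.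
right; split; apply/setP => x; rewrite inE ?allQ1 //.
case: (F1 x) => _ [u hu].
by apply/negPn/negP => hx; move: (q1 u x (allQ1 u) hx); rewrite (negbTE hu).
Qed.

Lemma atom_tangle : atom A -> 2 <= k + l -> is_tangle A.
Proof.
move=> hA h2.
have nu := atom_nouniv hA h2; have ni := atom_noiso hA h2.
have hk : 2 <= k.
  case: (ltnP 1 k) => // hk.
  case: k A hA h2 nu ni hk => [|[|k']] A' hA' h2' nu' ni' hk' //.
  - have h0 : 0 < l by lia.
    by case: (ni' (Ordinal h0)) => -[].
  - have h0 : 0 < l by lia.
    case: (nu' ord0) => w hw; case: (ni' w) => u hu.
    have e : u = ord0 by apply: val_inj => /=; have := ltn_ord u; lia.
    by rewrite e (negbTE hw) in hu.
have hl : 2 <= l.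
  case: (ltnP 1 l) => // hl.
  case: l A hA h2 nu ni hl hk => [|[|l']] A' hA' h2' nu' ni' hl' hk' //.
  - by case: (nu' (Ordinal hk')) => -[].
  - case: (ni' ord0) => u hu; case: (nu' u) => w hw.
    have e : w = ord0 by apply: val_inj => /=; have := ltn_ord w; lia.
    by rewrite e hu in hw.
rewrite /is_tangle hk hl /=; apply/andP; split.
-
  apply/forallP => a; apply/forallP => b; apply/negPn/negP => hab.
  pose r := incomp_rel (nbr2 A).
  case: (min_ex a (fun w => #|nbr2 A w|)) => c0 hc0.
  have [x hx] : exists x, ~~ connect r c0 x.
    case: (boolP (connect r c0 a)) => ha; last by exists a.
    case: (boolP (connect r c0 b)) => hb; last by exists b.
    case/negP: hab; apply: connect_trans _ hb.
    by rewrite (sym_connect_sym (incomp_sym _)).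
  have hab' := above hc0.
  pose P2 := [set w | connect r c0 w].
  pose P1 := [set u | [exists c, connect r c0 c && ((u, c) \in A)]].
  have hp : prefix A P1 P2.
    apply/prefixP; split=> u w.
      rewrite !inE => /existsP[c /andP[hc huc]] hw.
      by rewrite -nbr2E; apply: (subsetP (hab' _ _ hw hc)); rewrite nbr2E.
    rewrite !inE => hw; apply: contra => huw; apply/existsP; exists w; by rewrite hw.
  case: (atomP hA hp) => -[_ e2].
    by move/setP: e2 => /(_ c0); rewrite !inE connect0.
  by move/setP: e2 => /(_ x); rewrite !inE (negbTE hx).
-
  apply/forallP => a; apply/forallP => b; apply/negPn/negP => hab.
  pose r := incomp_rel (nbr1 A).
  case: (min_ex a (fun w => #|nbr1 A w|)) => c0 hc0.
  have [x hx] : exists x, ~~ connect r c0 x.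
    case: (boolP (connect r c0 a)) => ha; last by exists a.
    case: (boolP (connect r c0 b)) => hb; last by exists b.
    case/negP: hab; apply: connect_trans _ hb.
    by rewrite (sym_connect_sym (incomp_sym _)).
  have hab' := above hc0.
  pose P1 := [set u | ~~ connect r c0 u].
  pose P2 := [set w | [forall c, connect r c0 c ==> ((c, w) \notin A)]].
  have hp : prefix A P1 P2.
    apply/prefixP; split=> u w.
      rewrite !inE => hu /forallPn[c]; rewrite negb_imply negbK => /andP[hc hcw].
      by rewrite -nbr1E; apply: (subsetP (hab' _ _ hu hc)); rewrite nbr1E.
    rewrite !inE negbK => /forallP /(_ u) /implyP; exact.
  case: (atomP hA hp) => -[e1 _].
    by move/setP: e1 => /(_ x); rewrite !inE hx.
  by move/setP: e1 => /(_ c0); rewrite !inE connect0.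
Qed.

End Tangle.

End Part6.

Section Part7.

Definition rep m n (c : {set bigraph m n}) : bigraph m n := odflt set0 [pick H in c].

Lemma rep_in m n (c : {set bigraph m n}) G : G \in c -> rep c \in c.
Proof. by rewrite /rep; case: pickP => [H ->|/(_ G) ->]. Qed.

Lemma rep_class m n (G : bigraph m n) : bi_iso G (rep (iso_class G)).
Proof.
have := @rep_in _ _ (iso_class G) G; rewrite !inE bi_iso_refl; exact.
Qed.

Lemma imsetT_perm (T : finType) (s : {perm T}) : s @: setT = setT.
Proof.
by apply/eqP; rewrite eqEcard subsetT (card_imset _ perm_inj) leqnn.
Qed.

Lemma atom_iso k l (A A' : bigraph k l) : bi_iso A A' -> atom A -> atom A'.
Proof.
move=> /bi_isoE[s [t h]] hA; apply: atomI; first by case/andP: hA.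
move=> Q1 Q2 hq; have hq' := prefix_iso (iso_inv h) hq.
case: (atomP hA hq') => -[e1 e2]; [left|right].
  by rewrite -(imsetK_perm s Q1) -(imsetK_perm t Q2) e1 e2 !imset0.
by rewrite -(imsetK_perm s Q1) -(imsetK_perm t Q2) e1 e2 !imsetT_perm.
Qed.

Definition Qc m n : {set {set bigraph m n}} := [set iso_class G | G : bigraph m n].
Definition AQ k l : {set {set bigraph k l}} := [set iso_class G | G : bigraph k l & atom G].

Section Count.
Variables m n k l : nat.
Hypotheses (hk : k <= m) (hl : l <= n).

Definition Fc : {set {set bigraph m n}} :=
  [set c in Qc m n | [exists A : bigraph k l, exists R : bigraph (m - k) (n - l),
       atom A && (c == iso_class (cat A R))]].

Definition hmap (p : {set bigraph k l} * {set bigraph (m - k) (n - l)}) : {set bigraph m n} :=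
  iso_class (cat (rep p.1) (rep p.2)).

Lemma Fc_card : #|Fc| = #|AQ k l| * #|Qc (m - k) (n - l)|.
Proof.
rewrite -cardsX.
have -> : Fc = hmap @: setX (AQ k l) (Qc (m - k) (n - l)).
  apply/setP => c; apply/idP/imsetP.
    rewrite inE => /andP[_ /existsP[A /existsP[R /andP[hA /eqP ->]]]].
    exists (iso_class A, iso_class R); first by rewrite !inE; apply/andP; split;
      apply/imsetP; [exists A; rewrite ?inE|exists R].
    rewrite /hmap /=; apply/iso_classE.
    by apply: cat_iso => //; apply: rep_class.
  move=> [[a r] /setXP[/imsetP[A hA ->] /imsetP[R _ ->]] ->].
  rewrite inE in hA.
  rewrite inE; apply/andP; split; first by apply/imsetP; exists (cat (rep (iso_class A)) (rep (iso_class R))).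
  apply/existsP; exists (rep (iso_class A)); apply/existsP; exists (rep (iso_class R)).
  by rewrite /hmap /= eqxx andbT; apply: atom_iso (rep_class A) hA.
apply: card_in_imset => -[a r] [a' r'] /setXP[/imsetP[A hA ->] /imsetP[R _ ->]].
move=> /setXP[/imsetP[A' hA' ->] /imsetP[R' _ ->]].
rewrite inE in hA; rewrite inE in hA'.
rewrite /hmap /= => /iso_classE e.
have hrA := atom_iso (rep_class A) hA; have hrA' := atom_iso (rep_class A') hA'.
case: (cat_parts hk hl hrA hrA' e) => e1 e2.
congr (_, _); apply/iso_classE.
  exact: bi_iso_trans (rep_class A) (bi_iso_trans e1 (bi_iso_sym (rep_class A'))).
exact: bi_iso_trans (rep_class R) (bi_iso_trans e2 (bi_iso_sym (rep_class R'))).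
Qed.

End Count.

End Part7.

Section Part8.

Lemma Fc_unique m n k l k' l' c : k <= m -> l <= n -> k' <= m -> l' <= n ->
  c \in Fc m n k l -> c \in Fc m n k' l' -> k = k' /\ l = l'.
Proof.
move=> hk hl hk' hl'.
rewrite !inE => /andP[_ /existsP[A /existsP[R /andP[hA /eqP ->]]]].
move=> /andP[_ /existsP[A' /existsP[R' /andP[hA' /eqP /iso_classE e]]]].
exact: cat_dims hk hl hk' hl' hA hA' e.
Qed.

Definition a_unl k l := #|AQ k l|.

Lemma sum_in_F m n (F : {set {set bigraph m n}}) : F \subset Qc m n ->
  \sum_(c in Qc m n) ((c \in F) : nat) = #|F|.
Proof.
move=> sF; rewrite -sum1_card [RHS]big_mkcond [LHS]big_mkcond /=.
apply: eq_bigr => c _; case: (boolP (c \in F)) => h.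
  by rewrite (subsetP sF _ h).
by case: (c \in Qc m n).
Qed.

Lemma Fc_sub m n k l : Fc m n k l \subset Qc m n.
Proof. by apply/subsetP => c; rewrite inE => /andP[]. Qed.

Lemma b_rec m n : 0 < m + n ->
  b_unl m n = \sum_(k < m.+1) \sum_(l < n.+1) a_unl k l * b_unl (m - k) (n - l).
Proof.
move=> h0.
have -> : b_unl m n = #|Qc m n| by [].
have one : forall c, c \in Qc m n ->
    \sum_(k < m.+1) \sum_(l < n.+1) ((c \in Fc m n k l) : nat) = 1.
  move=> c /imsetP[G _ ->].
  rewrite pair_big /=; apply/eqP/sum_nat_eq1.
  case: (decomp G h0) => k [l [hk hl [A [R [hA hG]]]]].
  have hkm : k < m.+1 by []. have hln : l < n.+1 by [].
  have inF : iso_class G \in Fc m n k l.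
    rewrite inE; apply/andP; split; first by apply/imsetP; exists G.
    apply/existsP; exists A; apply/existsP; exists R; rewrite hA /=.
    by apply/eqP/iso_classE.
  exists (Ordinal hkm, Ordinal hln); split=> //=; first by rewrite inF.
  move=> [k' l'] hne _ /=; apply/eqP; rewrite eqb0; apply/negP => inF'.
  have [e1 e2] := Fc_unique hk hl (ltn_ord k') (ltn_ord l') inF inF'.
  case/eqP: hne; congr (_, _); apply: val_inj => /=; by rewrite ?e1 ?e2.
rewrite -sum1_card (eq_bigr _ (fun c h => esym (one c h))).
rewrite exchange_big /=; apply: eq_bigr => k _.
rewrite exchange_big /=; apply: eq_bigr => l _.
rewrite sum_in_F ?Fc_sub // Fc_card //; first by rewrite -ltnS.
by rewrite -ltnS.
Qed.

End Part8.

Section Part9.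

Lemma bigraph_triv k l (G : bigraph k l) : (k == 0) || (l == 0) -> G = set0.
Proof.
move=> h; apply/setP => -[u w]; rewrite in_set0.
case/orP: h => /eqP e; subst; [case: u => //|case: w => //].
Qed.

Lemma set01 (Q : {set 'I_1}) : Q = set0 \/ Q = setT.
Proof.
case: (boolP (ord0 \in Q)) => h; [right|left]; apply/setP => x;
  (have ex : x = ord0 by apply: val_inj => /=; have := ltn_ord x; lia);
  by rewrite ex ?inE ?h // (negbTE h).
Qed.

Lemma set0T (Q : {set 'I_0}) : Q = set0 /\ Q = setT.
Proof. by split; apply/setP => -[]. Qed.

Lemma atom10 (G : bigraph 1 0) : atom G.
Proof.
apply: atomI => // Q1 Q2 _; have [e0 eT] := set0T Q2.
by case: (set01 Q1) => ->; [left|right].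
Qed.

Lemma atom01 (G : bigraph 0 1) : atom G.
Proof.
apply: atomI => // Q1 Q2 _; have [e0 eT] := set0T Q1.
by case: (set01 Q2) => ->; [left|right].
Qed.

Lemma class_single k l (P : pred (bigraph k l)) : (k == 0) || (l == 0) -> P set0 ->
  #|[set iso_class G | G : bigraph k l & P G]| = 1.
Proof.
move=> h hP; rewrite (_ : [set _ | _ in _] = [set iso_class (set0 : bigraph k l)]) ?cards1 //.
apply/setP => c; rewrite inE; apply/imsetP/eqP => [[G _ ->]|->].
  by rewrite (bigraph_triv G h).
by exists set0; rewrite ?inE.
Qed.

Lemma b00 : b_unl 0 0 = 1.
Proof.
rewrite /b_unl (_ : [set _ | G : bigraph 0 0] = [set iso_class G | G : bigraph 0 0 & predT G]).
  exact: class_single.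
by apply/setP => c; apply/imsetP/imsetP => -[G _ ->]; exists G.
Qed.

Lemma a_unl_eq k l :
  a_unl k l = [&& k == 1 & l == 0] + [&& k == 0 & l == 1] + tau_unl k l.
Proof.
rewrite /a_unl /AQ /tau_unl.
case: (leqP 2 (k + l)) => h.
  have -> : [&& k == 1 & l == 0] = false by lia.
  have -> : [&& k == 0 & l == 1] = false by lia.
  have -> : [set iso_class G | G : bigraph k l & atom G] =
            [set iso_class G | G : bigraph k l & is_tangle G]; last by [].
  apply/setP => c; apply/imsetP/imsetP => -[G hG ->]; exists G => //;
    rewrite inE in hG *.
    by rewrite inE; exact: atom_tangle hG h.
  by rewrite inE; exact: tangle_atom.
have -> : [set iso_class G | G : bigraph k l & is_tangle G] = set0.
  apply/setP => c; rewrite in_set0; apply/imsetP => -[G]; rewrite inE.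
  by move=> /and4P[hk hl _ _]; lia.
rewrite cards0 addn0.
case: k l h => [|[|k]] [|[|l]] h //.
- rewrite (_ : [set _ | _ in _] = set0) ?cards0 //.
  apply/setP => c; rewrite in_set0; apply/imsetP => -[G]; by rewrite inE.
- by rewrite class_single //; apply: atom01.
- by rewrite class_single //; apply: atom10.
Qed.

End Part9.

Section Part10.
Import GRing.Theory.
Local Open Scope ring_scope.

Lemma fps_mulC (f g : fps2) m n : fps_mul f g m n = fps_mul g f m n.
Proof.
rewrite /fps_mul (reindex_inj rev_ord_inj); apply: eq_bigr => k _.
rewrite (reindex_inj rev_ord_inj); apply: eq_bigr => l _ /=.
rewrite !subSS !subKn 1?mulrC //; rewrite -ltnS; exact: ltn_ord.
Qed.

Lemma fps_mul1 (g : fps2) m n : fps_mul fps_one g m n = g m n.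
Proof.
rewrite /fps_mul big_ord_recl big_ord_recl /= big1 ?addr0; last first.
  by move=> i _; rewrite /fps_one /= mul0r.
rewrite big1 ?addr0 /fps_one /= ?mul1r ?subn0 //.
by move=> i _; rewrite big1 // => j _; rewrite mul0r.
Qed.

Lemma fps_mulBl (f h g : fps2) m n :
  fps_mul (fps_sub f h) g m n = fps_mul f g m n - fps_mul h g m n.
Proof.
rewrite /fps_mul -sumrB; apply: eq_bigr => k _; rewrite -sumrB.
by apply: eq_bigr => l _; rewrite /fps_sub mulrBl.
Qed.

Lemma fps_mulBr (f h g : fps2) m n :
  fps_mul g (fps_sub f h) m n = fps_mul g f m n - fps_mul g h m n.
Proof. by rewrite fps_mulC fps_mulBl !(fps_mulC g). Qed.

Lemma fps_unique (B D : fps2) : B 0%N 0%N = 1 -> (forall m n, fps_mul B D m n = 0) ->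
  forall m n, D m n = 0.
Proof.
move=> h1 h0.
suff : forall N m n, (m + n < N)%N -> D m n = 0 by move=> H m n; apply: (H (m + n).+1).
elim=> [//|N IH] m n hN.
have := h0 m n; rewrite /fps_mul pair_big /= (bigD1 (ord0, ord0)) //= h1 subn0 subn0 mul1r.
rewrite big1 ?addr0 // => -[k l] /= hne; rewrite mulrC.
have hk := ltn_ord k; have hl := ltn_ord l.
rewrite IH ?mul0r //.
have : (k != 0 :> nat) || (l != 0 :> nat).
  apply: contraR hne; rewrite negb_or !negbK => /andP[/eqP ek /eqP el].
  by apply/eqP; congr (_, _); apply: val_inj.
lia.
Qed.

Definition A_unl : fps2 := fun m n => Posz (a_unl m n).

Lemma a00 : a_unl 0 0 = 0%N.
Proof.
rewrite /a_unl /AQ (_ : [set _ | _ in _] = set0) ?cards0 //.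
by apply/setP => c; rewrite in_set0; apply/imsetP => -[G]; rewrite inE.
Qed.

Lemma posz_sum (I : finType) (F : I -> nat) : Posz (\sum_(i : I) F i)%N = \sum_(i : I) Posz (F i).
Proof. exact: (big_morph Posz PoszD (erefl _)). Qed.

Lemma B_rec_int m n : B_unl m n = fps_one m n + fps_mul A_unl B_unl m n.
Proof.
case: (posnP (m + n)) => h.
  have [-> ->] : m = 0%N /\ n = 0%N by lia.
  rewrite /B_unl b00 /fps_one /= /fps_mul !big_ord1 /A_unl a00 mul0r.
  by rewrite addr0.
have e1 : fps_one m n = 0 by rewrite /fps_one; have -> : (m == 0%N) && (n == 0%N) = false by lia.
rewrite e1 add0r /B_unl b_rec // posz_sum /fps_mul; apply: eq_bigr => k _.
by rewrite posz_sum; apply: eq_bigr => l _; rewrite PoszM.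
Qed.

Definition Fm : fps2 := fps_sub fps_one A_unl.

Lemma BFm m n : fps_mul B_unl Fm m n = fps_one m n.
Proof.
rewrite fps_mulC /Fm fps_mulBl fps_mul1 B_rec_int. ring.
Qed.

Lemma Fm_eq m n : Fm m n = fps_sub (fps_sub (fps_sub fps_one fps_x) fps_y) T_unl m n.
Proof.
rewrite /Fm /fps_sub /A_unl a_unl_eq /T_unl /fps_x /fps_y.
case: (m == 1%N); case: (n == 0%N); case: (m == 0%N); case: (n == 1%N) => /=;
rewrite ?PoszD /=; lia.
Qed.


End Part10.

Import GRing.Theory.

Theorem theorem4p2 :
  (exists C : fps2, fps_eq (fps_mul B_unl C) fps_one) /\
  (forall C : fps2, fps_eq (fps_mul B_unl C) fps_one ->
     fps_eq T_unl (fps_sub (fps_sub (fps_sub fps_one fps_x) fps_y) C)).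
Proof.
split; first by exists Fm => m n; apply: BFm.
move=> C hC m n.
have hD := @fps_unique B_unl (fps_sub C Fm).
have e : forall m n, C m n = Fm m n.
  move=> m' n'; apply/eqP; rewrite -subr_eq0; apply/eqP.
  apply: (hD _ _ m' n'); first by rewrite /B_unl b00.
  by move=> p q; rewrite fps_mulBr hC BFm subrr.
rewrite /fps_sub e Fm_eq /fps_sub. ring.
Qed.
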